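(* Assume $p(\cdot\mid z)$ is an additive energy distribution for all $z\in\mathcal{Z}^{\times}$, i.e. $p(x\mid z)=\frac{1}{\mathbb{Z}(z)}\exp(-\langle\sigma(z),E(x)\rangle)$ for some $E:\mathbb{R}^n\to\mathbb{R}^{md}$ with $\mathbb{Z}(z)=\int\exp(-\langle\sigma(z),E(x)\rangle)dx<\infty$ and support $\mathbb{R}^n$. Let $q(x,z)=q(z)q(x\mid z)$ be a test distribution with $q(x\mid z)=p(x\mid z)$ for all $z\in\mathcal{Z}^{\times}$, whose attribute support $\mathcal{Z}^{\mathsf{test}}$ satisfies $\mathcal{Z}^{\mathsf{test}}\subseteq\mathcal{Z}^{\times}$ and $\mathcal{Z}^{\mathsf{test}}\subseteq\mathsf{DAff}(\mathcal{Z}^{\mathsf{train}})$. Let $\hat E:\mathbb{R}^n\to\mathbb{R}^{md}$ and $\hat B:\mathcal{Z}^{\mathsf{train}}\to\mathbb{R}$ be such that the additive energy classifier $$\hat p(z\mid x)=\frac{\exp(-\langle\sigma(z),\hat E(x)\rangle+\log p(z)-\hat B(z))}{\sum_{z'\in\mathcal{Z}^{\mathsf{train}}}\exp(-\langle\sigma(z'),\hat E(x)\rangle+\log p(z')-\hat B(z'))},\quad z\in\mathcal{Z}^{\mathsf{train}},$$ satisfies $\hat p(z\mid x)=p(z\mid x)$ for all $z\in\mathcal{Z}^{\mathsf{train}}$ and all $x\in\mathbb{R}^n$. Define for $z\in\mathcal{Z}^{\times}$ the extrapolated bias $$B^\star(z)=\log\mathbb{E}_{x\sim p(x)}\Big[\frac{\exp(-\langle\sigma(z),\hat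 E(x)\rangle)}{\sum_{\tilde z\in\mathcal{Z}^{\mathsf{train}}}\exp(-\langle\sigma(\tilde z),\hat E(x)\rangle+\log p(\tilde z)-\hat B(\tilde z))}\Big],$$ where $p(x)$ is the training marginal of $x$. Let $\hat q$ be a probability distribution on attribute vectors with $\hat q(z)=q(z)$ for all $z\in\mathcal{Z}^{\mathsf{test}}$, and define for $z\in\mathcal{Z}^{\mathsf{test}}$ $$\hat q(z\mid x)=\frac{\exp(-\langle\sigma(z),\hat E(x)\rangle+\log\hat q(z)-B^\star(z))}{\sum_{z'\in\mathcal{Z}^{\mathsf{test}}}\exp(-\langle\sigma(z'),\hat E(x)\rangle+\log\hat q(z')-B^\star(z'))}.$$ Then $\hat q(z\mid x)=q(z\mid x)$ for all $z\in\mathcal{Z}^{\mathsf{test}}$ and all $x\in\mathbb{R}^n$.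
   Context: An attribute vector is $z=(z_1,\dots,z_m)$ with each $z_i\in\{1,\dots,d\}$; $\mathcal{Z}=\{1,\dots,d\}^m$. $\sigma(z)\in\{0,1\}^{md}$ is the concatenation of the one-hot encodings of $z_1,\dots,z_m$. For $\mathcal{A}=\{z^{(1)},\dots,z^{(k)}\}\subseteq\mathcal{Z}$, $\mathsf{DAff}(\mathcal{A})=\{z\in\mathcal{Z}:\exists\alpha\in\mathbb{R}^k,\ \sum_i\alpha_i=1,\ \sigma(z)=\sum_i\alpha_i\sigma(z^{(i)})\}$. The training distribution is $p(x,z)=p(z)p(x\mid z)$ on $\mathbb{R}^n\times\mathcal{Z}$, $\mathcal{Z}^{\mathsf{train}}$ is the support of $p(z)$, $\mathcal{Z}_i^{\mathsf{train}}$ the set of values of the $i$-th coordinate on $\mathcal{Z}^{\mathsf{train}}$, and $\mathcal{Z}^{\times}=\mathcal{Z}_1^{\mathsf{train}}\times\cdots\times\mathcal{Z}_m^{\mathsf{train}}$. $p(z\mid x)$ and $q(z\mid x)$ denote the posteriors of attributes given $x$ under $p$ and $q$. *)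

(* Defs.v *)
From HB Require Import structures.
From mathcomp Require Import all_boot all_order all_algebra.
From mathcomp Require Import all_classical all_reals all_analysis.
Set Implicit Arguments. Unset Strict Implicit. Unset Printing Implicit Defensive.
Import Order.TTheory GRing.Theory Num.Theory.
Local Open Scope ring_scope.

(* Attribute vectors z = (z_1,...,z_m), z_i in {1..d} (encoded as 'I_d). *)
Notation attr m d := {ffun 'I_m -> 'I_d}.

(* sigma(z) in {0,1}^(m d): concatenation of the one-hot encodings of the z_i
   (mxvec of the m x d matrix whose i-th row is the one-hot encoding of z_i). *)
Definition sigma (R : realType) (m d : nat) (z : attr m d) : 'rV[R]_(m * d) :=
  mxvec (\matrix_(i < m, j < d) ((z i == j)%:R : R)).

Definition dotv (R : realType) (k : nat) (u v : 'rV[R]_k) : R :=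
  \sum_(l < k) u 0 l * v 0 l.

Definition is_distr (R : realType) (T : finType) (p : T -> R) : Prop :=
  (forall t, 0 <= p t) /\ \sum_(t : T) p t = 1.

Definition supp (R : realType) (T : finType) (p : T -> R) : {set T} :=
  [set t | 0 < p t].

(* Z^x = Z_1^train x ... x Z_m^train for a training prior pz. *)
Definition Zcross (R : realType) (m d : nat) (pz : attr m d -> R) : {set attr m d} :=
  [set z : attr m d | [forall i : 'I_m, z i \in [set w i | w : attr m d in supp pz]]].

Definition DAff (R : realType) (m d : nat) (A : {set attr m d}) (z : attr m d) : Prop :=
  exists alpha : attr m d -> R,
    \sum_(w in A) alpha w = 1 /\ sigma R z = \sum_(w in A) alpha w *: sigma R w.

Section Dens.
Context (R : realType) (dX : measure_display) (X : measurableType dX)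
        (mu : {measure set X -> \bar R}) (m d : nat).

Definition Zpart (E : X -> 'rV[R]_(m * d)) (z : attr m d) : R :=
  Rintegral mu setT (fun x => expR (- dotv (sigma R z) (E x))).

Definition energy_dens (E : X -> 'rV[R]_(m * d)) (z : attr m d) (x : X) : R :=
  expR (- dotv (sigma R z) (E x)) / Zpart E z.

Definition marg (pz : attr m d -> R) (dens : attr m d -> X -> R) (x : X) : R :=
  \sum_(z in supp pz) pz z * dens z x.

Definition post (pz : attr m d -> R) (dens : attr m d -> X -> R)
    (z : attr m d) (x : X) : R :=
  pz z * dens z x / marg pz dens x.

Definition aclf (w : attr m d -> R) (A : {set attr m d})
    (Eh : X -> 'rV[R]_(m * d)) (B : attr m d -> R) (z : attr m d) (x : X) : R :=
  expR (- dotv (sigma R z) (Eh x) + ln (w z) - B z) /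
  \sum_(z' in A) expR (- dotv (sigma R z') (Eh x) + ln (w z') - B z').

Definition Bstar (pz : attr m d -> R) (dens : attr m d -> X -> R)
    (Eh : X -> 'rV[R]_(m * d)) (Bh : attr m d -> R) (z : attr m d) : R :=
  ln (Rintegral mu setT (fun x => marg pz dens x *
        (expR (- dotv (sigma R z) (Eh x)) /
         \sum_(z' in supp pz) expR (- dotv (sigma R z') (Eh x) + ln (pz z') - Bh z')))).

End Dens.

(* Main.v *)
Require Import Defs.
From HB Require Import structures.
From mathcomp Require Import all_boot all_order all_algebra.
From mathcomp Require Import all_classical all_reals all_analysis.
From mathcomp Require Import ring.
Import Order.TTheory GRing.Theory Num.Theory.
Local Open Scope ring_scope.

Lemma dotv_sum (R : realType) (k : nat) (T : finType) (A : {set T})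
  (a : T -> R) (s : T -> 'rV[R]_k) (v : 'rV[R]_k) :
  dotv (\sum_(w in A) a w *: s w) v = \sum_(w in A) a w * dotv (s w) v.
Proof.
rewrite /dotv.
under eq_bigr => l _ do rewrite summxE mulr_suml.
rewrite exchange_big /=; apply: eq_bigr => w _.
rewrite mulr_sumr; apply: eq_bigr => l _; by rewrite mxE mulrA.
Qed.
Lemma Rint_pos (R : realType) (dX : measure_display) (X : measurableType dX)
  (mu : {measure set X -> \bar R}) (f g : X -> R) :
  (forall x, 0 < f x) -> (forall x, 0 < g x) ->
  mu.-integrable setT (fun x => (f x)%:E) ->
  mu.-integrable setT (fun x => (g x)%:E) ->
  Rintegral mu setT g != 0 -> 0 < Rintegral mu setT f.
Proof.
move=> fp gp intf intg gn0.
rewrite lt0r Rintegral_ge0 ?andbT; last by move=> x _; exact: ltW.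
apply: contra gn0 => /eqP f0.
have mT : measurable (@setT X) by [].
have If0 : (\int[mu]_(x in setT) (f x)%:E = 0)%E.
  by rewrite -(fineK (integrable_fin_num mT intf)); rewrite /Rintegral in f0; rewrite f0.
have Iabs : (\int[mu]_(x in setT) `|(f x)%:E| = 0)%E.
  by rewrite -If0; apply: eq_integral => x _; rewrite gee0_abs // lee_fin ltW.
have mf := (proj1 (integrableP _ _ _ intf)).
have /(ae_eq_integral_abs mu mT mf) := Iabs.
case=> N [mN N0 sub].
have muT : mu setT = 0.
  apply: (subset_measure0 _ _ _ N0) => // x _; apply: sub => /= H.
  by move: (H I) => /eqP; rewrite eqe gt_eqF.
have mg := (proj1 (integrableP _ _ _ intg)).
have := integral_abs_eq0 mT mg muT.
rewrite /Rintegral => H; apply/eqP.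
rewrite (eq_integral (fun x => `|(g x)%:E|)%E) ?H //.
by move=> x _; rewrite gee0_abs // lee_fin ltW.
Qed.

Theorem theorem2 (R : realType) (dX : measure_display) (X : measurableType dX)
  (mu : {measure set X -> \bar R}) (m d : nat)
  (pz : attr m d -> R) (E : X -> 'rV[R]_(m * d))
  (qz : attr m d -> R) (qdens : attr m d -> X -> R)
  (Eh : X -> 'rV[R]_(m * d)) (Bh : attr m d -> R) (qh : attr m d -> R) :
  is_distr pz ->
  (forall l, measurable_fun setT (fun x => E x 0 l)) ->
  (forall z, z \in Zcross pz ->
     mu.-integrable setT (fun x => (expR (- dotv (sigma R z) (E x)))%:E)) ->
  is_distr qz ->
  (forall z, z \in Zcross pz -> qdens z = energy_dens mu E z) ->
  supp qz \subset Zcross pz ->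
  (forall z, z \in supp qz -> DAff R (supp pz) z) ->
  (forall z x, z \in supp pz ->
     aclf pz (supp pz) Eh Bh z x = post pz (energy_dens mu E) z x) ->
  is_distr qh ->
  (forall z, z \in supp qz -> qh z = qz z) ->
  forall z x, z \in supp qz ->
    aclf qh (supp qz) Eh (Bstar mu pz (energy_dens mu E) Eh Bh) z x
    = post qz qdens z x.
Proof.
move=> [pz0 pz1] mE intE [qz0 qz1] qdE suppq daff hclf [qh0 qh1] qhq z x0 zq.
pose f := fun w x => expR (- dotv (sigma R w) (E x)).
pose Z := Zpart mu E.
pose S := fun x => \sum_(z' in supp pz) expR (- dotv (sigma R z') (Eh x) + ln (pz z') - Bh z').
pose M := fun x => marg pz (energy_dens mu E) x.
have ed : forall w x, energy_dens mu E w x = f w x / Z w by [].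
have [w0 w0p] : exists w0, w0 \in supp pz.
  case: (pickP (fun w => w \in supp pz)) => [w0 Hw|H0]; first by exists w0.
  exfalso; move: pz1; rewrite big1 => [/eqP|t _]; first by rewrite eq_sym oner_eq0.
  have := H0 t; rewrite /= inE => /negbT; rewrite -leNgt => H.
  by apply/eqP; rewrite eq_le H pz0.
have suppZ : forall w, w \in supp pz -> w \in Zcross pz.
  move=> w wp; rewrite /Zcross inE; apply/forallP => i; apply/imsetP; by exists w.
have Spos : forall x, 0 < S x.
  move=> x; rewrite /S (bigD1 w0) //=.
  apply: (lt_le_trans (expR_gt0 (- dotv (sigma R w0) (Eh x) + ln (pz w0) - Bh w0))).
  by rewrite lerDl; apply: sumr_ge0 => *; apply/ltW; exact: expR_gt0.
have Zge0 : forall w, 0 <= Z w.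
  by move=> w; apply: Rintegral_ge0 => y _; apply/ltW; exact: expR_gt0.
have Mge0 : forall x, 0 <= M x.
  move=> x; apply: sumr_ge0 => w _; rewrite ed; apply: mulr_ge0 => //.
  by apply: divr_ge0 => //; apply/ltW; exact: expR_gt0.
have nz : forall w x, w \in supp pz -> Z w != 0 /\ M x != 0.
  move=> w x wp; have H := hclf w x wp; rewrite /post ed in H.
  have : pz w * (f w x / Z w) / marg pz (energy_dens mu E) x != 0.
    by rewrite -H /aclf gt_eqF // divr_gt0 //; [exact: expR_gt0| exact: Spos].
  by rewrite !mulf_eq0 !invr_eq0 => /norP [/norP [_ /norP [_ Zn]] Mn].
have Zpos : forall w, w \in supp pz -> 0 < Z w.
  by move=> w wp; rewrite lt0r Zge0 andbT; case: (nz w x0 wp).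
have Mpos : forall x, 0 < M x.
  by move=> x; rewrite lt0r Mge0 andbT; case: (nz w0 x w0p).
pose c := fun w => Bh w - ln (Z w).
pose g := fun x => ln (S x) - ln (M x).
have ident : forall w, w \in supp pz -> forall x,
    dotv (sigma R w) (Eh x) = dotv (sigma R w) (E x) - c w - g x.
  move=> w wp x; apply: oppr_inj; apply: expR_inj.
  have H := hclf w x wp; rewrite /post ed /aclf in H.
  have pw : 0 < pz w by move: wp; rewrite inE.
  rewrite (_ : - (dotv (sigma R w) (E x) - c w - g x) =
     - dotv (sigma R w) (E x) + Bh w + (- ln (Z w) + (ln (S x) + - ln (M x)))); last first.
    by rewrite /c /g; ring.
  rewrite !expRD (expRN (ln (Z w))) (expRN (ln (M x))) !lnK ?posrE ?Spos ?Mpos ?Zpos //.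
  move: H; rewrite (expRD (_ + _)) expRD (expRN (Bh w)) lnK ?posrE //.
  rewrite /f.
  move: (expR (- dotv (sigma R w) (Eh x))) (expR (- dotv (sigma R w) (E x))) => a b.
  have ebn : expR (Bh w) != 0 by rewrite gt_eqF // expR_gt0.
  have Sn : S x != 0 by rewrite gt_eqF.
  have pn : pz w != 0 by rewrite gt_eqF.
  have Zn : Z w != 0 by rewrite gt_eqF // Zpos.
  have Mn : M x != 0 by rewrite gt_eqF.
  move=> H; change (a * pz w / expR (Bh w) / S x = pz w * (b / Z w) / M x) in H; move: H.
  move: (expR (Bh w)) ebn (S x) Sn (Z w) Zn (M x) Mn => e en s sn zz zn mm mn H.
  have -> : a = (a * pz w * e^-1 / s) * s * e / pz w by field; rewrite ?en ?sn ?pn.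
  rewrite H; field; by rewrite ?en ?sn ?pn ?zn ?mn.
have key : forall z', z' \in supp qz -> forall x,
    expR (- dotv (sigma R z') (Eh x) + ln (qh z') - Bstar mu pz (energy_dens mu E) Eh Bh z')
    = expR (g x) * (qz z' * energy_dens mu E z' x).
  move=> z' z'q x.
  have z'Z : z' \in Zcross pz by exact: (fintype.subsetP suppq).
  have qpos : 0 < qz z' by move: z'q; rewrite inE.
  have [alpha [asum asig]] := daff z' z'q.
  pose C := \sum_(w in supp pz) alpha w * c w.
  have lin : forall y, - dotv (sigma R z') (Eh y) = - dotv (sigma R z') (E y) + C + g y.
    move=> y; rewrite asig !dotv_sum -[g y]mul1r -asum mulr_suml /C -!sumrN -!big_split /=.
    by apply: eq_bigr => w wp; rewrite (ident w wp y); ring.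
  have Zz : 0 < Z z'.
    apply: (@Rint_pos _ _ _ mu (f z') (f w0)).
    - by move=> y; exact: expR_gt0.
    - by move=> y; exact: expR_gt0.
    - exact: intE.
    - exact: intE (suppZ _ w0p).
    - by rewrite gt_eqF // Zpos.
  have Bst : Bstar mu pz (energy_dens mu E) Eh Bh z' = C + ln (Z z').
    rewrite /Bstar.
    have pw : forall y, M y * (expR (- dotv (sigma R z') (Eh y)) / S y) = expR C * f z' y.
      move=> y; rewrite lin !expRD /g (expRN (ln (M y))) !lnK ?posrE ?Spos ?Mpos //.
      have Mn : M y != 0 by rewrite gt_eqF.
      have Sn : S y != 0 by rewrite gt_eqF.
      rewrite /f; field; by rewrite ?Mn ?Sn.
    rewrite (@eq_Rintegral _ _ _ mu setT (fun y => expR C * f z' y)); last by move=> y _; exact: pw.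
    rewrite RintegralZl //; last exact: intE.
    by rewrite lnM ?posrE ?expR_gt0 // expRK.
  rewrite lin Bst qhq //.
  rewrite (_ : - dotv (sigma R z') (E x) + C + g x + ln (qz z') - (C + ln (Z z')) =
     g x + (ln (qz z') + (- dotv (sigma R z') (E x) + - ln (Z z')))); last by ring.
  rewrite !expRD (expRN (ln (Z z'))) !lnK ?posrE //.
have k := key z zq x0. rewrite /aclf /post /marg.
rewrite [X in X / _ = _]k.
under eq_bigr => z' z'q do rewrite (key z' z'q).
rewrite -mulr_sumr (qdE z); last exact: (fintype.subsetP suppq).
under [X in _ = _ / X]eq_bigr => z' z'q do rewrite (qdE z' (fintype.subsetP suppq _ z'q)).
rewrite invfM mulrACA mulfV ?mul1r //.
by rewrite gt_eqF // expR_gt0.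
Qed.
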